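(* Let $V$ be a real vector space of dimension $n$ and $k\ge2$ with $k\le n-1$. For standard isotropic subspaces $L\subseteq V\oplus\wedge^kV^*$ one has the implications $$\text{(C2s)}\Rightarrow\text{(C1)}\Leftrightarrow\text{(C3s)}\Rightarrow\text{(C2w) and (C3w)},$$ and these are distinct notions: there exist standard isotropic subspaces (for suitable $V$ and $k\ge2$) satisfying (C3w) but not (C2w); satisfying (C2w) but not (C3w); satisfying both (C2w) and (C3w) but not (C1); and satisfying (C3s) but not (C2s).
   Context: On $V\oplus\wedge^kV^*$ the pairing is $\langle X+\alpha,Y+\beta\rangle=i_X\beta+i_Y\alpha\in\wedge^{k-1}V^*$, with orthogonal $L^\perp$. $\mathrm{pr}_1,\mathrm{pr}_2$ are the projections onto $V$, $\wedge^kV^*$; $E=\mathrm{pr}_1(L)$, $A_L=L\cap\wedge^kV^*$. For $S\subseteq\wedge^kV^*$, $S^\circ=\{X\in V\mid i_X\eta=0\ \forall\eta\in S\}$; for $W\subseteq V$, $\mathrm{Ann}(W)=\{\alpha\in\wedge^kV^*\mid i_Y\alpha=0\ \forall Y\in W\}$. An isotropic ($L\subseteq L^\perp$) subspace is standard if $\mathrm{Ann}(E)^\circ=E$ (equivalently $\dim E=n$ or $\dim E\le n-k$). Conditions: (C1) $L=L^\perp$; (C2w) $L\subseteq L^\perp$ and $L\cap V=\mathrm{pr}_2(L)^\circ$; (C2s) $L\subseteq L^\perp$ and $\mathrm{Ann}(L\cap V)=\mathrm{pr}_2(L)$; (C3w) $L\subseteq L^\perp$ and $E=A_L^\circ$;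 (C3s) $L\subseteq L^\perp$ and $\mathrm{Ann}(E)=A_L$. *)

(* Defs.v *)
From mathcomp Require Import all_boot all_order all_algebra.
From mathcomp Require Import reals.
Set Implicit Arguments. Unset Strict Implicit. Unset Printing Implicit Defensive.
Import GRing.Theory Num.Theory.
Local Open Scope ring_scope.

(* A (candidate) k-form on V is a function of a sequence of vectors
   (nat -> V) -> R; it is an element of wedge^k V^* when it depends only on
   the first k arguments, is linear in each of them and is alternating. *)
Definition kform (R : realType) (n : nat) := (nat -> 'rV[R]_n) -> R.

Definition setarg (R : realType) (n : nat) (f : nat -> 'rV[R]_n) (j : nat)
  (v : 'rV[R]_n) : nat -> 'rV[R]_n := fun m => if m == j then v else f m.

Definition is_form (R : realType) (n k : nat) (a : kform R n) : Prop :=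
  [/\ (forall f g : nat -> 'rV[R]_n, (forall j, (j < k)%N -> f j = g j) -> a f = a g),
      (forall f j (c : R) v w, (j < k)%N ->
          a (setarg f j (c *: v + w)) = c * a (setarg f j v) + a (setarg f j w))
    & (forall f i j, (i < j)%N -> (j < k)%N -> f i = f j -> a f = 0)].

Definition ins (R : realType) (n : nat) (X : 'rV[R]_n) (a : kform R n) : kform R n :=
  fun f => a (fun j => if j is j'.+1 then f j' else X).

Definition elt (R : realType) (n : nat) := ('rV[R]_n * kform R n)%type.
Definition eset (R : realType) (n : nat) := elt R n -> Prop.

Definition zero_form (R : realType) (n : nat) : kform R n := fun _ => 0.

Definition pairing_zero (R : realType) (n : nat) (p q : elt R n) : Prop :=
  forall f, ins p.1 q.2 f + ins q.1 p.2 f = 0.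

Definition is_subspace (R : realType) (n k : nat) (L : eset R n) : Prop :=
  [/\ (forall p, L p -> is_form k p.2),
      L (0, @zero_form R n),
      (forall p q, L p -> L q -> L (p.1 + q.1, fun f => p.2 f + q.2 f))
    & (forall (c : R) p, L p -> L (c *: p.1, fun f => c * p.2 f))].

Definition perp (R : realType) (n k : nat) (L : eset R n) : eset R n :=
  fun q => is_form k q.2 /\ forall p, L p -> pairing_zero p q.

Definition isotropic (R : realType) (n k : nat) (L : eset R n) : Prop :=
  forall p, L p -> perp k L p.

Definition seteq (T : Type) (A B : T -> Prop) : Prop := forall x, A x <-> B x.

Definition pr1L (R : realType) (n : nat) (L : eset R n) : 'rV[R]_n -> Prop :=
  fun X => exists a, L (X, a).
Definition pr2L (R : realType) (n : nat) (L : eset R n) : kform R n -> Prop :=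
  fun a => exists X, L (X, a).
Definition AL (R : realType) (n : nat) (L : eset R n) : kform R n -> Prop :=
  fun a => L (0, a).
Definition LcapV (R : realType) (n : nat) (L : eset R n) : 'rV[R]_n -> Prop :=
  fun X => L (X, @zero_form R n).

Definition circ (R : realType) (n : nat) (S : kform R n -> Prop) : 'rV[R]_n -> Prop :=
  fun X => forall eta, S eta -> forall f, ins X eta f = 0.
Definition Ann (R : realType) (n k : nat) (W : 'rV[R]_n -> Prop) : kform R n -> Prop :=
  fun a => is_form k a /\ forall Y, W Y -> forall f, ins Y a f = 0.

Definition standard (R : realType) (n k : nat) (L : eset R n) : Prop :=
  seteq (circ (Ann k (pr1L L))) (pr1L L).

Definition C1 (R : realType) (n k : nat) (L : eset R n) : Prop :=
  seteq L (perp k L).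
Definition C2w (R : realType) (n k : nat) (L : eset R n) : Prop :=
  isotropic k L /\ seteq (LcapV L) (circ (pr2L L)).
Definition C2s (R : realType) (n k : nat) (L : eset R n) : Prop :=
  isotropic k L /\ seteq (Ann k (LcapV L)) (pr2L L).
Definition C3w (R : realType) (n k : nat) (L : eset R n) : Prop :=
  isotropic k L /\ seteq (pr1L L) (circ (AL L)).
Definition C3s (R : realType) (n k : nat) (L : eset R n) : Prop :=
  isotropic k L /\ seteq (Ann k (pr1L L)) (AL L).

Definition std_iso (R : realType) (n k : nat) (L : eset R n) : Prop :=
  [/\ is_subspace k L, isotropic k L & standard k L].

(* Main.v *)
Require Import Defs.
From mathcomp Require Import all_boot all_order all_algebra.
From mathcomp Require Import reals.
From mathcomp Require Import ring lra zify.
From Stdlib Require Import FunctionalExtensionality.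
From Stdlib Require Classical_Prop.
Set Implicit Arguments. Unset Strict Implicit. Unset Printing Implicit Defensive.
Import GRing.Theory Num.Theory.
Local Open Scope ring_scope.


Section Forms.
Variables (R : realType) (n k : nat).
Implicit Types (a b : kform R n) (f g : nat -> 'rV[R]_n).



Lemma form_pt a f g : is_form k a -> (forall j, f j = g j) -> a f = a g.
Proof. by case=> H _ _ E; apply: H => j _; apply: E. Qed.

Lemma form_ext a b : is_form k a -> (forall f, a f = b f) -> is_form k b.
Proof.
case=> H1 H2 H3 E; split.
- by move=> f g Hfg; rewrite -!E; apply: H1.
- by move=> f j c v w Hj; rewrite -!E; apply: H2.
- by move=> f i j Hij Hjk Hf; rewrite -E; apply: H3 Hf.
Qed.

Lemma form_zero : is_form k (@zero_form R n).
Proof. by split=> //= *; rewrite /zero_form ?mulr0 ?addr0. Qed.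

Lemma form_add a b : is_form k a -> is_form k b -> is_form k (fun f => a f + b f).
Proof.
case=> A1 A2 A3 [B1 B2 B3]; split.
- by move=> f g H; rewrite (A1 f g H) (B1 f g H).
- by move=> f j c v w Hj; rewrite A2 // B2 // mulrDr addrACA.
- by move=> f i j Hij Hjk Hf; rewrite (A3 f i j) // (B3 f i j) // addr0.
Qed.

Lemma form_scale c a : is_form k a -> is_form k (fun f => c * a f).
Proof.
case=> A1 A2 A3; split.
- by move=> f g H; rewrite (A1 f g H).
- by move=> f j d v w Hj; rewrite A2 // mulrDr mulrCA.
- by move=> f i j Hij Hjk Hf; rewrite (A3 f i j) // mulr0.
Qed.

Lemma form_sub a b : is_form k a -> is_form k b -> is_form k (fun f => a f - b f).
Proof.
move=> Ha Hb; apply: (form_ext (b := fun f => a f - b f)) (form_add Ha (form_scale (-1) Hb)) _.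
by move=> f; rewrite mulN1r.
Qed.

Lemma form_setarg_add a f j v w : is_form k a -> (j < k)%N ->
  a (setarg f j (v + w)) = a (setarg f j v) + a (setarg f j w).
Proof. by case=> _ A2 _ Hj; rewrite -{1}(scale1r v) A2 // mul1r. Qed.

Lemma ins_lin a c X Y f : is_form k a -> (0 < k)%N ->
  ins (c *: X + Y) a f = c * ins X a f + ins Y a f.
Proof.
case=> A1 A2 A3 Hk; rewrite /ins.
set h := fun j => if j is j'.+1 then f j' else 0.
have E : forall Z, a (fun j => if j is j'.+1 then f j' else Z) = a (setarg h 0 Z).
  by move=> Z; apply: A1 => -[|j] _.
by rewrite !E A2.
Qed.



Lemma ins0 a f : is_form k a -> (0 < k)%N -> ins 0 a f = 0.
Proof.
move=> Ha Hk; have := ins_lin 1 0 0 f Ha Hk.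
rewrite scale1r addr0 mul1r => /(congr1 (fun x => x - ins 0 a f)).
by rewrite subrr addrK.
Qed.

Lemma ins_sub a Y Z f : is_form k a -> (0 < k)%N ->
  ins (Y - Z) a f = ins Y a f - ins Z a f.
Proof.
move=> Ha Hk; rewrite addrC -scaleN1r ins_lin // mulN1r addrC //.
Qed.

Lemma setargC f i j x y : i != j ->
  forall m, setarg (setarg f i x) j y m = setarg (setarg f j y) i x m.
Proof.
move=> Hij m; rewrite /setarg; case: (eqVneq m j) => [E|]; case: (eqVneq m i) => // E'.
by rewrite -E -E' eqxx in Hij.
Qed.

Lemma form_antisym a f i j x y : is_form k a -> (i < j)%N -> (j < k)%N ->
  a (setarg (setarg f i x) j y) = - a (setarg (setarg f i y) j x).
Proof.
move=> Ha Hij Hjk; have Hik : (i < k)%N by apply: ltn_trans Hjk.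
have Hne : i != j by rewrite ltn_eqF.
case: (Ha) => A1 A2 A3.
have Z u g : a (setarg (setarg g i u) j u) = 0.
  apply: (A3 _ i j) => //; rewrite /setarg eqxx (negbTE Hne) eqxx //.
have Z' u g : a (setarg (setarg g j u) i u) = 0.
  by rewrite -(Z u g); apply: form_pt => // m; apply: setargC; rewrite eq_sym.
have H : a (setarg (setarg f i (x + y)) j x) + a (setarg (setarg f i (x + y)) j y) = 0.
  by rewrite -form_setarg_add //; apply: Z.
have E1 : a (setarg (setarg f i (x + y)) j x) = a (setarg (setarg f j x) i (x + y)).
  by apply: form_pt => // m; apply: setargC.
have E2 : a (setarg (setarg f i (x + y)) j y) = a (setarg (setarg f j y) i (x + y)).
  by apply: form_pt => // m; apply: setargC.
have E3 : a (setarg (setarg f j x) i y) = a (setarg (setarg f i y) j x).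
  by apply: form_pt => // m; apply: setargC; rewrite eq_sym.
have E4 : a (setarg (setarg f j y) i x) = a (setarg (setarg f i x) j y).
  by apply: form_pt => // m; apply: setargC; rewrite eq_sym.
rewrite E1 E2 in H.
rewrite !(form_setarg_add _ _ _ Ha Hik) in H.
rewrite !Z' addr0 add0r E3 E4 in H.
by move/eqP: H; rewrite addr_eq0 => /eqP ->; rewrite opprK.
Qed.

End Forms.


Section Sep.
Variables (R : realType) (n : nat) (K : 'rV[R]_n -> Prop).
Hypotheses (K0 : K 0) (KD : forall x y, K x -> K y -> K (x + y))
  (KZ : forall c x, K x -> K (c *: x)).

Lemma K_mul m (A : 'M[R]_(m, n)) : (forall i, K (row i A)) -> forall x : 'rV_m, K (x *m A).
Proof.
move=> HA x; rewrite mulmx_sum_row; apply: (big_ind K) => // i _; exact: KZ.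
Qed.

Lemma K_span_ex d : forall m (A : 'M[R]_(m, n)), (forall i, K (row i A)) ->
  (n - \rank A <= d)%N ->
  exists m' (A' : 'M[R]_(m', n)), (forall i, K (row i A')) /\ forall s, K s -> (s <= A')%MS.
Proof.
elim: d => [|d IH] m A HA Hd;
  (case: (Classical_Prop.classic (exists s, K s /\ ~~ (s <= A)%MS)) => [[s [Ks Hs]]|H];
    last by exists m, A; split=> // s Ks; apply/negPn/negP => Hn; apply: H; exists s).
- have : (\rank A < \rank (col_mx A s))%N.
    apply: rank_ltmx; rewrite ltmxE col_mx_sub (negbTE Hs) andbF andbT.
    by rewrite -addsmxE addsmxSl.
  have := rank_leq_col (col_mx A s); lia.
- apply: (IH _ (col_mx A s)).
  + move=> i; case: (splitP i) => j Hj.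
    * have -> : i = lshift 1 j by apply: val_inj; rewrite /= Hj.
      by rewrite rowKu.
    * have -> : i = rshift m j by apply: val_inj; rewrite /= Hj.
      rewrite rowKd (ord1 j); have -> : row 0 s = s by apply/rowP => t; rewrite mxE.
      exact: Ks.
  + have : (\rank A < \rank (col_mx A s))%N.
      apply: rank_ltmx; rewrite ltmxE col_mx_sub (negbTE Hs) andbF andbT.
      by rewrite -addsmxE addsmxSl.
    have := rank_leq_col (col_mx A s); lia.
Qed.

Lemma separate W : ~ K W -> exists phi : 'rV[R]_n -> R,
  [/\ forall c x y, phi (c *: x + y) = c * phi x + phi y,
      forall x, K x -> phi x = 0 & phi W = 1].
Proof.
move=> nW.
have [m [A [HA HK]]] : exists m' (A' : 'M[R]_(m', n)), (forall i, K (row i A')) /\ forall s, K s -> (s <= A')%MS.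
  apply: (@K_span_ex n 0 0) => //; first by case.
  have := rank_leq_col (0 : 'M[R]_(0, n)); lia.
have nWA : ~~ (W <= A)%MS.
  apply/negP => /submxP [D HD]; apply: nW; rewrite HD; exact: K_mul.
move: nWA; rewrite submxE => nz.
have [j Hj] : exists j, (W *m cokermx A) 0 j != 0.
  apply: Classical_Prop.NNPP => Hn; move/negP: nz; apply; apply/eqP/rowP => j.
  apply/eqP; rewrite [X in _ == X]mxE; apply: Classical_Prop.NNPP => Hj; apply: Hn; exists j; exact/negP.
set d := (W *m cokermx A) 0 j.
exists (fun x => (x *m cokermx A) 0 j / d); split.
- by move=> c x y; rewrite mulmxDl -scalemxAl !mxE mulrDl mulrA.
- move=> x Kx; move: (HK x Kx); rewrite submxE => /eqP ->; by rewrite mxE mul0r.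
- by rewrite divff.
Qed.
End Sep.


Section Gen.
Variables (R : realType) (n k : nat) (L : eset R n).
Hypothesis Hk : (0 < k)%N.

Lemma form_pull (a : kform R n) (P : 'rV[R]_n -> 'rV[R]_n) : is_form k a ->
  (forall c v w, P (c *: v + w) = c *: P v + P w) ->
  is_form k (fun g => a (fun j => P (g j))).
Proof.
case=> A1 A2 A3 HP; split.
- by move=> f g H; apply: A1 => j Hj; rewrite H.
- move=> f j c v w Hj.
  have E x : a (fun m => P (setarg f j x m)) = a (setarg (fun m => P (f m)) j (P x)).
    by apply: A1 => m _; rewrite /setarg; case: (m == j).
  by rewrite !E HP A2.
- by move=> f i j Hij Hjk Hf; apply: (A3 _ i j) => //; rewrite Hf.
Qed.

Lemma key : std_iso k L -> seteq (Ann k (LcapV L)) (pr2L L) ->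
  forall W, circ (pr2L L) W -> L (W, @zero_form R n).
Proof.
case=> [[Lform L0 LD LZ] Liso Lstd] H2 W HW.
apply: Classical_Prop.NNPP => nW.
pose K := LcapV L.
have K0 : K 0 := L0.
have KD : forall x y, K x -> K y -> K (x + y).
  move=> x y Hx Hy; have := LD _ _ Hx Hy => /=.
  have -> // : (fun f => @zero_form R n f + zero_form f) = @zero_form R n.
  by apply: functional_extensionality => f; rewrite /zero_form addr0.
have KZ : forall c x, K x -> K (c *: x).
  move=> c x Hx; have := LZ c _ Hx => /=.
  have -> // : (fun f => c * @zero_form R n f) = @zero_form R n.
  by apply: functional_extensionality => f; rewrite /zero_form mulr0.
have HA : forall g, Ann k K g -> forall h, ins W g h = 0.
  by move=> g /H2 Hg h; apply: HW.
have KE : forall Y, K Y -> pr1L L Y by move=> Y HY; exists (@zero_form R n).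
case: (Classical_Prop.classic (exists al, Ann k K al /\ exists f, al f <> 0))
  => [[al [Hal [f0 Hf0]]] | Hno]; last first.
  have Z : forall a, Ann k K a -> forall f, a f = 0.
    move=> a Ha f; apply: Classical_Prop.NNPP => Hf; apply: Hno; exists a; split => //.
    by exists f.
  have : pr1L L W.
    apply/(Lstd W) => eta [Heta1 Heta2] g; rewrite /ins; apply: Z; split => // Y HY.
    exact: Heta2 (KE Y HY).
  case=> a Ha; have /H2 Ka : pr2L L a by exists W.
  have Ea : a = @zero_form R n by apply: functional_extensionality => f; rewrite (Z a Ka).
  by apply: nW; rewrite -Ea.
have [phi [philin phiK phiW]] := separate K0 KD KZ nW.
case: (Hal) => Halform Halann.
case: (Halform) => A1 A2 A3.
have claim : forall m, (m <= k)%N -> exists f, al f <> 0 /\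
    forall j, (0 < j)%N -> (j < m)%N -> phi (f j) = 0.
  elim=> [|m IH] Hm; first by exists f0; split.
  have [f [Hf Hphi]] := IH (ltnW Hm).
  case: (eqVneq m 0%N) => [m0 | m0].
    exists f; split => // j Hj1 Hj2; exfalso; lia.
  pose f' := setarg f m (f m - phi (f m) *: W).
  exists f'; split.
  - have E1 : al f = phi (f m) * al (setarg f m W) + al f'.
      rewrite -A2 //.
      rewrite addrC subrK; apply: (form_pt Halform) => j; rewrite /setarg.
      by case: eqP => // ->.
    have E2 : al (setarg f m W) = 0.
      rewrite (form_pt (g := setarg (setarg f 0%N (f 0%N)) m W) Halform); last first.
        by move=> j; rewrite /setarg; case: eqP => //; case: eqP => // ->.
      rewrite (form_antisym _ _ _ Halform) //; last by lia.
      rewrite (form_pt (g := fun j => if j is j'.+1 then setarg f m (f 0%N) j' .+1 else W) Halform).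
        by have := HA al Hal (fun j' => setarg f m (f 0%N) j'.+1); rewrite /ins => ->; rewrite oppr0.
      move=> [|j]; rewrite /setarg //=; first by rewrite eq_sym (negbTE m0).
    by move=> Hf'; apply: Hf; rewrite E1 E2 mulr0 add0r.
  - move=> j Hj1 Hj2; rewrite /f' /setarg; case: (eqVneq j m) => [_|ne].
      rewrite addrC -scaleNr philin phiW mulr1 addNr //.
    apply: Hphi => //; lia.
have [f [Hf Hphi]] := claim k (leqnn k).
pose P x := x + phi x *: (f 0%N - W).
have Plin : forall c v w, P (c *: v + w) = c *: P v + P w.
  have Pl : forall (d : 'rV[R]_n) c v w,
      (c *: v + w) + phi (c *: v + w) *: d = c *: (v + phi v *: d) + (w + phi w *: d).
    by move=> d c v w; rewrite philin scalerDl scalerDr scalerA addrACA.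
  by move=> c v w; apply: Pl.
pose be := fun g => al (fun j => P (g j)).
have Hbe : Ann k K be.
  split; first exact: form_pull.
  move=> Y HY g; rewrite /ins /be.
  rewrite (form_pt (g := fun j => if j is j'.+1 then P (g j') else Y) Halform).
    exact: (Halann Y HY).
  by case=> [|j] //=; rewrite /P phiK // scale0r addr0.
have := HA be Hbe (fun j => f j.+1); rewrite /ins /be.
rewrite (A1 _ f); first exact: Hf.
case=> [|j] Hj /=; first by rewrite /P phiW scale1r addrC subrK.
by rewrite /P Hphi // scale0r addr0.
Qed.


Lemma ins_zero X f : ins X (@zero_form R n) f = 0.
Proof. by []. Qed.

Lemma C2s_C1 : std_iso k L -> C2s k L -> C1 k L.
Proof.
move=> HL [Hiso H2]; have HL' := HL; case: HL => [[Lform L0 LD LZ] _ Lstd].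
move=> q; split; first exact: Hiso.
case: q => Y b [Hb Hperp].
have Kb : Ann k (LcapV L) b.
  split => // X HX f; have := Hperp (X, @zero_form R n) HX f.
  by rewrite /= ins_zero addr0.
have [Z HZ] := (H2 b).1 Kb.
have HW : circ (pr2L L) (Y - Z).
  move=> c [U HU] f; rewrite (ins_sub (k:=k)) //; last exact: (Lform _ HU).
  have h1 := Hperp (U, c) HU f.
  have h2 := (Hiso _ HZ).2 (U, c) HU f.
  have : ins Y c f = ins Z c f.
    by apply: (addrI (ins U b f)); rewrite /= in h1 h2; rewrite h1 h2.
  by move=> ->; rewrite subrr.
have := LD _ _ HZ (key HL' H2 HW) => /=.
rewrite addrC subrK.
have -> // : (fun f => b f + @zero_form R n f) = b.
by apply: functional_extensionality => f; rewrite /zero_form addr0.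
Qed.

Lemma C1_C3s : is_subspace k L -> C1 k L -> C3s k L.
Proof.
move=> [Lform L0 LD LZ] H1.
have Hiso : isotropic k L by move=> p Hp; apply/H1.
split => // a; split.
- case=> Ha HE; apply/H1; split => // p Hp f.
  have Ep : pr1L L p.1 by exists p.2; case: p Hp.
  by rewrite HE // add0r (ins0 (k:=k)) //; apply: Lform.
- move=> Ha; split; first exact: (Lform _ Ha).
  move=> Y [c Hc] f; have := (Hiso _ Ha).2 _ Hc f => /=.
  by rewrite (ins0 (k:=k)) // ?addr0 //; apply: (Lform _ Hc).
Qed.

Lemma circ_eq (S S' : kform R n -> Prop) : seteq S S' -> seteq (circ S) (circ S').
Proof.
by move=> E X; split=> H eta He; apply: H; apply/E.
Qed.

Lemma C3s_C1 : std_iso k L -> C3s k L -> C1 k L.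
Proof.
move=> [[Lform L0 LD LZ] _ Lstd] [Hiso H3].
move=> q; split; first exact: Hiso.
case: q => Y b [Hb Hperp].
have HY : pr1L L Y.
  apply/(Lstd Y); apply/(circ_eq H3) => eta Heta f.
  have := Hperp (0, eta) Heta f; rewrite /= (ins0 (k:=k)) // add0r //.
have [a Ha] := HY.
have Hba : AL L (fun f => b f - a f).
  apply/H3; split; first by apply: form_sub => //; apply: (Lform _ Ha).
  move=> X [c Hc] f; rewrite /ins.
  have h1 := Hperp (X, c) Hc f.
  have h2 := (Hiso _ Ha).2 (X, c) Hc f.
  rewrite /= in h1 h2.
  have : ins X b f = ins X a f.
    by apply: (addIr (ins Y c f)); rewrite h1 h2.
  by rewrite /ins => ->; rewrite subrr.
have := LD _ _ Ha Hba => /=.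
rewrite addr0.
have -> // : (fun f => a f + (b f - a f)) = b.
by apply: functional_extensionality => f; rewrite addrC subrK.
Qed.

Lemma C1_C2w : is_subspace k L -> C1 k L -> C2w k L.
Proof.
move=> [Lform L0 LD LZ] H1.
have Hiso : isotropic k L by move=> p Hp; apply/H1.
split => // X; split.
- move=> HX eta [Y HY] f.
  have := (Hiso _ HY).2 _ HX f.
  by rewrite /= ins_zero addr0.
- move=> HX; apply/H1; split; first exact: form_zero.
  move=> p Hp f; rewrite ins_zero add0r; apply: HX.
  by exists p.1; case: p Hp.
Qed.

Lemma C3s_C3w : standard k L -> C3s k L -> C3w k L.
Proof.
move=> Lstd [Hiso H3]; split => // X.
by rewrite -(Lstd X); apply: circ_eq => a; split => /H3.
Qed.

End Gen.


Definition ee (R : realType) n (i : 'I_n) : 'rV[R]_n := \row_j (if j == i then 1 else 0).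
Definition om (R : realType) n (i j : 'I_n) : kform R n :=
  fun f => (f 0%N) 0 i * (f 1%N) 0 j - (f 0%N) 0 j * (f 1%N) 0 i.
Definition ev (R : realType) n (u v : 'rV[R]_n) : nat -> 'rV[R]_n :=
  fun m => if m is 0%N then u else v.
Arguments ee {R n}. Arguments om {R n}. Arguments ev {R n}.

Section Ex.
Variable R : realType.

Lemma form_om n (i j : 'I_n) : is_form 2 (@om R n i j).
Proof.
split.
- by move=> f g H; rewrite /om !H.
- move=> f [|[|//]] c v w _; rewrite /om /setarg /= !mxE; ring.
- move=> f i0 j0 Hij Hj Hf.
  have [Ei Ej] : i0 = 0%N /\ j0 = 1%N by lia.
  by rewrite Ei Ej in Hf; rewrite /om Hf; ring.
Qed.

Lemma ann_om n (E : 'rV[R]_n -> Prop) (i j : 'I_n) :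
  (forall Y, E Y -> Y 0 i = 0 /\ Y 0 j = 0) -> Ann 2 E (om i j).
Proof.
move=> HE; split; first exact: form_om.
by move=> Y /HE [Hi Hj] f; rewrite /ins /om /= Hi Hj; ring.
Qed.

Lemma coord_om n (i j : 'I_n) (X : 'rV[R]_n) : i != j ->
  (forall f, ins X (om i j) f = 0) -> X 0 i = 0 /\ X 0 j = 0.
Proof.
move=> ij H; have := H (fun _ => ee j); have := H (fun _ => ee i).
rewrite /ins /om /= !mxE !eqxx (negbTE ij) eq_sym (negbTE ij).
move=> h1 h2; split; lra.
Qed.

Lemma std_of n k (L : eset R n) :
  (forall X, circ (Ann k (pr1L L)) X -> pr1L L X) -> standard k L.
Proof. by move=> H X; split; [apply: H | move=> HX eta [_ He]; apply: He]. Qed.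

End Ex.


Definition a0 : 'I_3 := @Ordinal 3 0 isT.
Definition a1 : 'I_3 := @Ordinal 3 1 isT.
Definition a2 : 'I_3 := @Ordinal 3 2 isT.

Section Ex3.
Variable R : realType.

Definition L3 : eset R 3 := fun p =>
  p.1 = 0 /\ exists a b, forall f, p.2 f = a * om a0 a1 f + b * om a0 a2 f.

Lemma row3_0 (X : 'rV[R]_3) : X 0 a0 = 0 -> X 0 a1 = 0 -> X 0 a2 = 0 -> X = 0.
Proof.
move=> h0 h1 h2; apply/rowP => i; rewrite mxE.
case: i => [[|[|[|//]]] Hi].
- by rewrite -h0; congr (X 0 _); apply: val_inj.
- by rewrite -h1; congr (X 0 _); apply: val_inj.
- by rewrite -h2; congr (X 0 _); apply: val_inj.
Qed.

Lemma L3_form p : L3 p -> is_form 2 p.2.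
Proof.
case=> _ [a [b H]]; apply: (form_ext (a := fun f => a * om a0 a1 f + b * om a0 a2 f)).
  by apply: form_add; apply: form_scale; apply: form_om.
by move=> f; rewrite H.
Qed.

Lemma L3_sub : is_subspace 2 L3.
Proof.
split.
- exact: L3_form.
- by split => //; exists 0, 0 => f /=; rewrite /zero_form; ring.
- move=> p q [Hp [a [b Ha]]] [Hq [a' [b' Hb]]]; split; first by rewrite /= Hp Hq addr0.
  by exists (a + a'), (b + b') => f /=; rewrite Ha Hb; ring.
- move=> c p [Hp [a [b Ha]]]; split; first by rewrite /= Hp scaler0.
  by exists (c * a), (c * b) => f /=; rewrite Ha; ring.
Qed.

Lemma L3_iso : isotropic 2 L3.
Proof.
move=> p Hp; split; first exact: L3_form.
move=> q Hq f; rewrite Hp.1 Hq.1 !(ins0 (k:=2)) ?addr0 //; exact: L3_form.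
Qed.

Lemma L3_pr1 X : pr1L L3 X <-> X = 0.
Proof.
split; first by case=> a [].
by move=> ->; exists (@zero_form R 3); split => //; exists 0, 0 => f /=; rewrite /zero_form; ring.
Qed.

Lemma L3_coords (X : 'rV[R]_3) : (forall f, ins X (om a0 a1) f = 0) -> (forall f, ins X (om a0 a2) f = 0) -> X = 0.
Proof.
move=> H1 H2; have [h0 h1] := coord_om (isT : a0 != a1) H1.
have [_ h2] := coord_om (isT : a0 != a2) H2.
exact: row3_0.
Qed.

Lemma L3_std : standard 2 L3.
Proof.
apply: std_of => X HX; apply/L3_pr1; apply: L3_coords.
- apply: HX; apply: ann_om => Y /L3_pr1 ->; rewrite !mxE //.
- apply: HX; apply: ann_om => Y /L3_pr1 ->; rewrite !mxE //.
Qed.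

Lemma L3_om01 : L3 (0, om a0 a1).
Proof. by split => //; exists 1, 0 => f /=; ring. Qed.
Lemma L3_om02 : L3 (0, om a0 a2).
Proof. by split => //; exists 0, 1 => f /=; ring. Qed.

Lemma L3_C2w : C2w 2 L3.
Proof.
split; first exact: L3_iso.
move=> X; split.
- case=> /= -> _ eta [Y HY] f; rewrite (ins0 (k:=2)) //; exact: (L3_form HY).
- move=> HX; have -> : X = 0.
    by apply: L3_coords; apply: HX; [exists 0; exact: L3_om01 | exists 0; exact: L3_om02].
  by split => //; exists 0, 0 => f /=; rewrite /zero_form; ring.
Qed.

Lemma L3_C3w : C3w 2 L3.
Proof.
split; first exact: L3_iso.
move=> X; split.
- move/L3_pr1 => -> eta Heta f; rewrite (ins0 (k:=2)) //; exact: (L3_form Heta).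
- move=> HX; apply/L3_pr1; apply: L3_coords; apply: HX; [exact: L3_om01 | exact: L3_om02].
Qed.

Lemma L3_notC1 : ~ C1 2 L3.
Proof.
move=> H.
have : L3 (0, om a1 a2).
  apply/H; split; first exact: form_om.
  move=> p Hp f; rewrite Hp.1 !(ins0 (k:=2)) ?addr0 //; first [exact: form_om | exact: (L3_form Hp)].
case=> _ [a [b Hab]]; have := Hab (ev (ee a1) (ee a2)).
rewrite /om /ev /= !mxE /= => h; lra.
Qed.

End Ex3.


Definition b0 : 'I_4 := @Ordinal 4 0 isT.
Definition b1 : 'I_4 := @Ordinal 4 1 isT.
Definition b2 : 'I_4 := @Ordinal 4 2 isT.
Definition b3 : 'I_4 := @Ordinal 4 3 isT.

Section Ex4.
Variable R : realType.

Definition L4 : eset R 4 := fun p =>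
  [/\ p.1 0 b1 = 0, p.1 0 b2 = 0, p.1 0 b3 = 0 &
   exists a b, forall f, p.2 f = p.1 0 b0 * om b2 b3 f + a * om b1 b2 f + b * om b1 b3 f].

Lemma L4_form p : L4 p -> is_form 2 p.2.
Proof.
case=> _ _ _ [a [b H]].
apply: (form_ext (a := fun f => p.1 0 b0 * om b2 b3 f + a * om b1 b2 f + b * om b1 b3 f)).
  by apply: form_add; [apply: form_add|]; apply: form_scale; apply: form_om.
by move=> f; rewrite H.
Qed.

Lemma L4_sub : is_subspace 2 L4.
Proof.
split.
- exact: L4_form.
- by split; rewrite /= ?mxE //; exists 0, 0 => f /=; rewrite /zero_form; ring.
- move=> p q [p1 p2 p3 [a [b Ha]]] [q1 q2 q3 [a' [b' Hb]]].
  split; rewrite /= ?mxE ?p1 ?p2 ?p3 ?q1 ?q2 ?q3 ?addr0 //.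
  by exists (a + a'), (b + b') => f; rewrite Ha Hb ?mxE; ring.
- move=> c p [p1 p2 p3 [a [b Ha]]].
  split; rewrite /= ?mxE ?p1 ?p2 ?p3 ?mulr0 //.
  by exists (c * a), (c * b) => f; rewrite Ha ?mxE; ring.
Qed.

Lemma L4_iso : isotropic 2 L4.
Proof.
move=> p Hp; split; first exact: L4_form.
move=> q Hq f.
case: Hp => p1 p2 p3 [a [b Ha]]; case: Hq => q1 q2 q3 [a' [b' Hb]].
rewrite /ins Ha Hb /om /= p1 p2 p3 q1 q2 q3; ring.
Qed.

Lemma L4_pr1 X : pr1L L4 X <-> [/\ X 0 b1 = 0, X 0 b2 = 0 & X 0 b3 = 0].
Proof.
split; first by case=> a [].
case=> h1 h2 h3; exists (fun f => X 0 b0 * om b2 b3 f + 0 * om b1 b2 f + 0 * om b1 b3 f).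
by split => //; exists 0, 0.
Qed.

Lemma L4_coords (X : 'rV[R]_4) : (forall f, ins X (om b1 b2) f = 0) ->
  (forall f, ins X (om b1 b3) f = 0) -> [/\ X 0 b1 = 0, X 0 b2 = 0 & X 0 b3 = 0].
Proof.
move=> H1 H2; have [h1 h2] := coord_om (isT : b1 != b2) H1.
by have [_ h3] := coord_om (isT : b1 != b3) H2.
Qed.

Lemma L4_std : standard 2 L4.
Proof.
apply: std_of => X HX; apply/L4_pr1; apply: L4_coords.
- by apply: HX; apply: ann_om => Y /L4_pr1 [].
- by apply: HX; apply: ann_om => Y /L4_pr1 [].
Qed.

Lemma L4_om12 : L4 (0, om b1 b2).
Proof. by split; rewrite /= ?mxE //; exists 1, 0 => f /=; rewrite ?mxE; ring. Qed.
Lemma L4_om13 : L4 (0, om b1 b3).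
Proof. by split; rewrite /= ?mxE //; exists 0, 1 => f /=; rewrite ?mxE; ring. Qed.

Lemma L4_C3w : C3w 2 L4.
Proof.
split; first exact: L4_iso.
move=> X; split.
- move/L4_pr1 => [h1 h2 h3] eta [_ _ _ [a [b Hab]]] f.
  simpl in Hab; rewrite /ins Hab /om /= !mxE h1 h2 h3; ring.
- move=> HX; apply/L4_pr1; apply: L4_coords; apply: HX; [exact: L4_om12 | exact: L4_om13].
Qed.

Lemma L4_notC2w : ~ C2w 2 L4.
Proof.
case=> _ H.
have : circ (pr2L L4) (ee b0).
  move=> eta [Y [_ _ _ [a [b Hab]]]] f.
  simpl in Hab; rewrite /ins Hab /om /= !mxE /=; ring.
move/H => [_ _ _ [a [b Hab]]].
have := Hab (ev (ee b2) (ee b3)); rewrite /zero_form /om /ev /= !mxE /= => h; lra.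
Qed.

End Ex4.


Definition c0 : 'I_5 := @Ordinal 5 0 isT.
Definition c1 : 'I_5 := @Ordinal 5 1 isT.
Definition c2 : 'I_5 := @Ordinal 5 2 isT.
Definition c3 : 'I_5 := @Ordinal 5 3 isT.
Definition c4 : 'I_5 := @Ordinal 5 4 isT.

Section Ex5.
Variable R : realType.

Definition Phi5 (X : 'rV[R]_5) : kform R 5 := fun f =>
  X 0 c0 * om c1 c2 f + X 0 c1 * (om c3 c4 f - om c0 c2 f).

Definition L5 : eset R 5 := fun p =>
  [/\ p.1 0 c2 = 0, p.1 0 c3 = 0, p.1 0 c4 = 0 & forall f, p.2 f = Phi5 p.1 f].

Lemma Phi5_form X : is_form 2 (Phi5 X).
Proof.
apply: form_add; apply: form_scale; last apply: form_sub; apply: form_om.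
Qed.

Lemma L5_form p : L5 p -> is_form 2 p.2.
Proof. by case=> _ _ _ H; apply: (form_ext (Phi5_form p.1)) => f; rewrite H. Qed.

Lemma L5_sub : is_subspace 2 L5.
Proof.
split.
- exact: L5_form.
- by split; rewrite /= ?mxE // => f; rewrite /zero_form /Phi5 !mxE; ring.
- move=> p q [p1 p2 p3 Ha] [q1 q2 q3 Hb].
  split; rewrite /= ?mxE ?p1 ?p2 ?p3 ?q1 ?q2 ?q3 ?addr0 //.
  by move=> f; rewrite Ha Hb /Phi5 !mxE; ring.
- move=> c p [p1 p2 p3 Ha].
  split; rewrite /= ?mxE ?p1 ?p2 ?p3 ?mulr0 //.
  by move=> f; rewrite Ha /Phi5 !mxE; ring.
Qed.

Lemma L5_iso : isotropic 2 L5.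
Proof.
move=> p Hp; split; first exact: L5_form.
move=> q Hq f.
case: Hp => p1 p2 p3 Ha; case: Hq => q1 q2 q3 Hb.
rewrite /ins Ha Hb /Phi5 /om /= p1 p2 p3 q1 q2 q3; ring.
Qed.

Lemma L5_std : standard 2 L5.
Proof.
apply: std_of => X HX.
have A1 : Ann 2 (pr1L L5) (om c2 c3) by apply: ann_om => Y [a [y2 y3 y4 _]].
have A2 : Ann 2 (pr1L L5) (om c3 c4) by apply: ann_om => Y [a [y2 y3 y4 _]].
have [h2 h3] := coord_om (isT : c2 != c3) (HX _ A1).
have [_ h4] := coord_om (isT : c3 != c4) (HX _ A2).
by exists (Phi5 X); split.
Qed.

Lemma L5_C2w : C2w 2 L5.
Proof.
split; first exact: L5_iso.
move=> X; split.
- case=> /= x2 x3 x4 H0.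
  have := H0 (ev (ee c1) (ee c2)); have := H0 (ev (ee c3) (ee c4)).
  rewrite /zero_form /Phi5 /om /ev /= !mxE /= => e1 e2.
  have x0 : X 0 c0 = 0 by lra.
  have x1 : X 0 c1 = 0 by lra.
  move=> eta [Y [_ _ _ Hb]] f; simpl in Hb.
  rewrite /ins Hb /Phi5 /om /= x0 x1 x2 x3 x4; ring.
- move=> HX.
  have P0 : pr2L L5 (om c1 c2).
    exists (ee c0); split; rewrite /= ?mxE //.
    by move=> f; rewrite /Phi5 !mxE /=; ring.
  have P1 : pr2L L5 (fun f => om c3 c4 f - om c0 c2 f).
    exists (ee c1); split; rewrite /= ?mxE //.
    by move=> f; rewrite /Phi5 !mxE /=; ring.
  have [x1 x2] := coord_om (isT : c1 != c2) (HX _ P0).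
  have := HX _ P1 (fun _ => ee c4); have := HX _ P1 (fun _ => ee c3);
    have := HX _ P1 (fun _ => ee c2).
  rewrite /ins /om /= !mxE /= => e1 e2 e3.
  have x0 : X 0 c0 = 0 by lra.
  have x3 : X 0 c3 = 0 by lra.
  have x4 : X 0 c4 = 0 by lra.
  split => //= f; rewrite /zero_form /Phi5 x0 x1; ring.
Qed.

Lemma L5_notC3w : ~ C3w 2 L5.
Proof.
case=> _ H.
have : circ (AL L5) (ee c4).
  move=> eta [_ _ _ Hb] f; simpl in Hb.
  rewrite /ins Hb /Phi5 /om /= !mxE /=; ring.
move/H => [a [_ _ h _]]; move: h; rewrite /= mxE /= => h.
by move/eqP: h; rewrite oner_eq0.
Qed.

End Ex5.


Section Ex6.
Variable R : realType.

Definition Phi6 (X : 'rV[R]_5) : kform R 5 := fun f =>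
  X 0 c0 * (om c1 c2 f + om c3 c4 f) - X 0 c1 * om c0 c2 f + X 0 c2 * om c0 c1 f
  - X 0 c3 * om c0 c4 f + X 0 c4 * om c0 c3 f.

Definition L6 : eset R 5 := fun p => forall f, p.2 f = Phi6 p.1 f.

Lemma Phi6_form X : is_form 2 (Phi6 X).
Proof.
have H := (form_add (form_sub (form_add (form_sub
  (form_scale (X 0 c0) (form_add (@form_om R 5 c1 c2) (@form_om R 5 c3 c4)))
  (form_scale (X 0 c1) (@form_om R 5 c0 c2))) (form_scale (X 0 c2) (@form_om R 5 c0 c1)))
  (form_scale (X 0 c3) (@form_om R 5 c0 c4))) (form_scale (X 0 c4) (@form_om R 5 c0 c3))).
by apply: (form_ext H).
Qed.

Lemma L6_form p : L6 p -> is_form 2 p.2.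
Proof. by move=> H; apply: (form_ext (Phi6_form p.1)) => f; rewrite H. Qed.

Lemma L6_sub : is_subspace 2 L6.
Proof.
split.
- exact: L6_form.
- by move=> f; rewrite /zero_form /Phi6 /= !mxE; ring.
- by move=> p q Ha Hb f; rewrite /= Ha Hb /Phi6 !mxE; ring.
- by move=> c p Ha f; rewrite /= Ha /Phi6 !mxE; ring.
Qed.

Lemma L6_iso : isotropic 2 L6.
Proof.
move=> p Hp; split; first exact: L6_form.
move=> q Hq f.
rewrite /ins Hp Hq /Phi6 /om /=; ring.
Qed.

Lemma L6_pr1 X : pr1L L6 X.
Proof. by exists (Phi6 X). Qed.

Lemma L6_std : standard 2 L6.
Proof. by apply: std_of => X _; apply: L6_pr1. Qed.

Lemma L6_C3s : C3s 2 L6.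
Proof.
split; first exact: L6_iso.
move=> a; split.
- case=> Ha HE f /=; rewrite /Phi6 !mxE.
  have -> : a f = ins (f 0%N) a (fun j => f j.+1).
    by apply: form_pt Ha _ => -[|j].
  rewrite HE; [ring | exact: L6_pr1].
- move=> Ha; split; first exact: (L6_form Ha).
  move=> Y _ f; have Ha' : forall g, a g = Phi6 0 g := Ha; rewrite /ins Ha' /Phi6 !mxE; ring.
Qed.

Lemma L6_notC2s : ~ C2s 2 L6.
Proof.
case=> _ H.
have : Ann 2 (LcapV L6) (om c1 c3).
  split; first exact: form_om.
  move=> Y HY f.
  have := HY (ev (ee c0) (ee c2)); have := HY (ev (ee c0) (ee c4)).
  rewrite /zero_form /Phi6 /om /ev /= !mxE /= => e1 e2.
  have y1 : Y 0 c1 = 0 by lra.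
  have y3 : Y 0 c3 = 0 by lra.
  by rewrite /ins /om /= y1 y3; ring.
move/H => [X HX]; have := HX (ev (ee c1) (ee c3)).
rewrite /Phi6 /om /ev /= !mxE /= => h; lra.
Qed.

End Ex6.

Close Scope ring_scope.

Theorem propositionA2 (R : realType) :
  (forall (n k : nat), (2 <= k)%N -> (k <= n - 1)%N ->
     forall L : eset R n, std_iso k L ->
       [/\ (C2s k L -> C1 k L), (C1 k L <-> C3s k L)
         & (C3s k L -> C2w k L /\ C3w k L)]) /\
  [/\ (exists (n k : nat) (L : eset R n), [/\ (2 <= k)%N, (k <= n - 1)%N,
          std_iso k L, C3w k L & ~ C2w k L]),
      (exists (n k : nat) (L : eset R n), [/\ (2 <= k)%N, (k <= n - 1)%N,
          std_iso k L, C2w k L & ~ C3w k L]),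
      (exists (n k : nat) (L : eset R n), [/\ (2 <= k)%N, (k <= n - 1)%N,
          std_iso k L, C2w k L /\ C3w k L & ~ C1 k L])
    & (exists (n k : nat) (L : eset R n), [/\ (2 <= k)%N, (k <= n - 1)%N,
          std_iso k L, C3s k L & ~ C2s k L])].
Proof.
split.
- move=> n k Hk2 Hkn L HL.
  have Hk : (0 < k)%N by apply: leq_trans Hk2.
  case: (HL) => Hsub Hiso Hstd.
  split.
  + exact: (C2s_C1 Hk HL).
  + split; [exact: (C1_C3s Hk Hsub) | exact: (C3s_C1 Hk HL)].
  + move=> H3; split; last exact: (C3s_C3w Hstd H3).
    by apply: (C1_C2w Hsub); exact: (C3s_C1 Hk HL H3).
- split.
  + exists 4%N, 2%N, (@L4 R); split => //; last exact: L4_notC2w.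
    * by split; [exact: L4_sub | exact: L4_iso | exact: L4_std].
    * exact: L4_C3w.
  + exists 5%N, 2%N, (@L5 R); split => //; last exact: L5_notC3w.
    * by split; [exact: L5_sub | exact: L5_iso | exact: L5_std].
    * exact: L5_C2w.
  + exists 3%N, 2%N, (@L3 R); split => //; last exact: L3_notC1.
    * by split; [exact: L3_sub | exact: L3_iso | exact: L3_std].
    * by split; [exact: L3_C2w | exact: L3_C3w].
  + exists 5%N, 2%N, (@L6 R); split => //; last exact: L6_notC2s.
    * by split; [exact: L6_sub | exact: L6_iso | exact: L6_std].
    * exact: L6_C3s.
Qed.
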